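(* Suppose $(\mathcal W,\mathcal W,\mu)$ is a reduced system of the FTvN system $(\mathcal V,\mathcal W,\lambda)$, with $\mathcal W$ finite dimensional. Let $F:=\operatorname{ran}\lambda$ and let $F^*=\{w\in\mathcal W:\langle w,f\rangle\ge0\ \forall f\in F\}$ be its dual cone in $\mathcal W$. Then: (a) If $u,v\in F$ and $u-v\in F^*$, then $v\prec u$ in $\mathcal W$. (b) For all $x_1,\dots,x_k\in\mathcal V$, $\lambda(x_1+\cdots+x_k)\prec\lambda(x_1)+\cdots+\lambda(x_k)$ in $\mathcal W$. (c) $x\prec y$ in $\mathcal V$ implies $\lambda(x)\prec\lambda(y)$ in $\mathcal W$; the converse holds if $\mathcal V$ is finite dimensional.
   Context: A Fan-Theobald-von Neumann (FTvN) system is a triple $(\mathcal V,\mathcal W,\lambda)$ where $\mathcal V,\mathcal W$ are real inner product spaces and $\lambda:\mathcal V\to\mathcal W$ is a map such that: (A1) $\|\lambda(x)\|=\|x\|$ for all $x$; (A2) $\langle x,y\rangle\le\langle\lambda(x),\lambda(y)\rangle$ for all $x,y$; (A3) for every $c\in\mathcal V$ and $q\in\lambda(\mathcal V)$ there exists $x$ with $\lambda(x)=q$ and $\langle c,x\rangle=\langle\lambda(c),\lambda(x)\rangle$. A FTvN system $(\mathcal W,\mathcal W,\mu)$ is a reduced system of $(\mathcal V,\mathcal W,\lambda)$ if (C1) $\mu\circ\lambda=\lambda$ and (C2) $\operatorname{ran}\mu\subseteq\operatorname{ran}\lambda$. Majorization in $\mathcal V$: $x\prec y$ iff $x\in\operatorname{conv}\{z\in\mathcal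 V:\lambda(z)=\lambda(y)\}$. Majorization in $\mathcal W$ (with respect to $\mu$): $v\prec u$ iff $v\in\operatorname{conv}\{w\in\mathcal W:\mu(w)=\mu(u)\}$. *)

(* Defs.v *)
From HB Require Import structures.
From mathcomp Require Import all_boot all_order all_algebra.
From mathcomp Require Import reals.
Set Implicit Arguments. Unset Strict Implicit. Unset Printing Implicit Defensive.
Import Order.TTheory GRing.Theory Num.Theory.
Local Open Scope ring_scope.

Section Defs.
Variable R : realType.

Definition is_inner_product (V : lmodType R) (ip : V -> V -> R) : Prop :=
  [/\ (forall x y, ip x y = ip y x),
      (forall a x y z, ip (a *: x + y) z = a * ip x z + ip y z),
      (forall x, 0 <= ip x x) &
      (forall x, ip x x = 0 -> x = 0)].

Definition ipnorm (V : lmodType R) (ip : V -> V -> R) (x : V) : R :=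
  Num.sqrt (ip x x).

Definition finite_dim (V : lmodType R) : Prop :=
  exists (n : nat) (e : 'I_n -> V),
    forall x : V, exists c : 'I_n -> R, x = \sum_(i < n) c i *: e i.

Definition conv (V : lmodType R) (S : V -> Prop) : V -> Prop :=
  fun x => exists (n : nat) (a : 'I_n -> R) (z : 'I_n -> V),
    [/\ (forall i, 0 <= a i), \sum_(i < n) a i = 1,
        (forall i, S (z i)) & x = \sum_(i < n) a i *: z i].

Definition FTvN (V W : lmodType R) (ipV : V -> V -> R) (ipW : W -> W -> R)
    (lam : V -> W) : Prop :=
  [/\ is_inner_product ipV, is_inner_product ipW,
      (forall x, ipnorm ipW (lam x) = ipnorm ipV x),                (* A1 *)
      (forall x y, ipV x y <= ipW (lam x) (lam y)) &                (* A2 *)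
      (forall (c : V) (q : W), (exists z, lam z = q) ->
         exists x, lam x = q /\ ipV c x = ipW (lam c) (lam x))].    (* A3 *)

Definition reduced_system (V W : lmodType R) (ipV : V -> V -> R)
    (ipW : W -> W -> R) (lam : V -> W) (mu : W -> W) : Prop :=
  [/\ FTvN ipV ipW lam, FTvN ipW ipW mu,
      (forall x, mu (lam x) = lam x) &                               (* C1 *)
      (forall w, exists x, mu w = lam x)].                           (* C2 *)

Definition majV (V W : lmodType R) (lam : V -> W) (x y : V) : Prop :=
  conv (fun z => lam z = lam y) x.

Definition majW (W : lmodType R) (mu : W -> W) (v u : W) : Prop :=
  conv (fun w => mu w = mu u) v.

End Defs.

(* Main.v *)
Require Import Defs.
From HB Require Import structures.
From mathcomp Require Import all_boot all_order all_algebra.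
From mathcomp Require Import reals lra.
From mathcomp Require Import classical_sets boolp topology normedtype derive matrix_topology matrix_normedtype.
Import Order.TTheory GRing.Theory Num.Theory numFieldTopology.Exports numFieldNormedType.Exports.
Local Open Scope ring_scope.
Set Implicit Arguments. Unset Strict Implicit. Unset Printing Implicit Defensive.

Section IP.
Variable R : realType.
Variable E : lmodType R.
Variable ip : E -> E -> R.
Hypothesis hip : is_inner_product ip.

Lemma ipC x y : ip x y = ip y x. Proof. by case: hip. Qed.
Lemma ip_lin a x y z : ip (a *: x + y) z = a * ip x z + ip y z.
Proof. by case: hip. Qed.
Lemma ip_ge0 x : 0 <= ip x x. Proof. by case: hip. Qed.
Lemma ip_eq0 x : ip x x = 0 -> x = 0. Proof. by case: hip => _ _ _; apply. Qed.

Lemma ip0l z : ip 0 z = 0.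
Proof.
have := ip_lin 1 0 0 z; rewrite scaler0 addr0 mul1r => h.
lra.
Qed.
Lemma ipDl x y z : ip (x + y) z = ip x z + ip y z.
Proof. by have := ip_lin 1 x y z; rewrite scale1r mul1r. Qed.
Lemma ipZl a x z : ip (a *: x) z = a * ip x z.
Proof. by rewrite -(addr0 (a *: x)) ip_lin ip0l addr0. Qed.
Lemma ipNl x z : ip (- x) z = - ip x z.
Proof. by rewrite -scaleN1r ipZl mulN1r. Qed.
Lemma ipBl x y z : ip (x - y) z = ip x z - ip y z.
Proof. by rewrite ipDl ipNl. Qed.
Lemma ip0r z : ip z 0 = 0. Proof. by rewrite ipC ip0l. Qed.
Lemma ipDr x y z : ip z (x + y) = ip z x + ip z y.
Proof. by rewrite ipC ipDl !(ipC z). Qed.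
Lemma ipZr a x z : ip z (a *: x) = a * ip z x.
Proof. by rewrite ipC ipZl ipC. Qed.
Lemma ipNr x z : ip z (- x) = - ip z x.
Proof. by rewrite ipC ipNl ipC. Qed.
Lemma ipBr x y z : ip z (x - y) = ip z x - ip z y.
Proof. by rewrite ipDr ipNr. Qed.
Lemma ip_suml I (r : seq I) (P : pred I) (F : I -> E) z :
  ip (\sum_(i <- r | P i) F i) z = \sum_(i <- r | P i) ip (F i) z.
Proof. exact: (big_morph (fun x => ip x z) (fun x y => ipDl x y z) (ip0l z)). Qed.
Lemma ip_sumr I (r : seq I) (P : pred I) (F : I -> E) z :
  ip z (\sum_(i <- r | P i) F i) = \sum_(i <- r | P i) ip z (F i).
Proof. exact: (big_morph (fun x => ip z x) (fun x y => ipDr x y z) (ip0r z)). Qed.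

Lemma ip_abs_le x y : `|ip x y| <= (ip x x + ip y y) / 2.
Proof.
have h1 := ip_ge0 (x - y); have h2 := ip_ge0 (x + y).
rewrite !(ipDl, ipDr, ipNl, ipNr) opprK (ipC y x) in h1 h2.
rewrite ler_norml; apply/andP; split.
all: lra.
Qed.

End IP.

Section Car.
Variable R : realType.
Variable E : lmodType R.
Variable n : nat.
Variable e : 'I_n -> E.
Hypothesis hspan : forall x : E, exists c : 'I_n -> R, x = \sum_(i < n) c i *: e i.

Definition rep (S : E -> Prop) k (a : 'I_k -> R) (z : 'I_k -> E) (w : E) :=
  [/\ (forall i, 0 <= a i), \sum_(i < k) a i = 1, (forall i, S (z i)) &
      w = \sum_(i < k) a i *: z i].

Lemma affine_dep k (z : 'I_k -> E) : (n.+1 < k)%N ->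
  exists b : 'I_k -> R, [/\ exists j, b j != 0, \sum_(j < k) b j = 0 &
    \sum_(j < k) b j *: z j = 0].
Proof.
move=> hk.
have [cf hcf] := fin_all_exists (fun j => hspan (z j)).
pose Am : 'M[R]_(k, n + 1) := row_mx (\matrix_(j, i) cf j i) (const_mx 1).
have nf : ~~ row_free Am.
  rewrite /row_free; apply/negP => /eqP h.
  have := rank_leq_col Am; rewrite h addn1 => h2.
  by move: (leq_trans hk h2); rewrite ltnn.
have K0 : kermx Am != 0 by rewrite kermx_eq0.
have [i [j Kij]] : exists i j, kermx Am i j != 0.
  case/boolP: [exists i, exists j, kermx Am i j != 0].
    by move=> /existsP[i /existsP[j Kij]]; exists i, j.
  move=> /existsPn H; suff h0 : kermx Am = 0 by rewrite h0 eqxx in K0.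
  apply/matrixP => i j.
  by have := H i; move/existsPn/(_ j); rewrite negbK => /eqP ->; rewrite [RHS]mxE.
pose b j := kermx Am i j.
have hb : row i (kermx Am) *m Am = 0 by rewrite -row_mul mulmx_ker row0.
set K := kermx Am in b hb.
rewrite /Am in hb.
have hb1 i' : \sum_(j < k) b j * cf j i' = 0.
  have := congr1 (fun M : 'M[R]_(1, n + 1) => M ord0 (lshift 1 i')) hb; rewrite [LHS]mxE [RHS]mxE => h; apply: etrans h.
  by apply: eq_bigr => j' _; rewrite row_mxEl /b !mxE.
have hb2 : \sum_(j < k) b j = 0.
  have := congr1 (fun M : 'M[R]_(1, n + 1) => M ord0 (rshift n (ord0 : 'I_1))) hb; rewrite [LHS]mxE [RHS]mxE => h; apply: etrans h.
  by apply: eq_bigr => j' _; rewrite row_mxEr /b !mxE mulr1.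
exists b; split => //; first by exists j.
under eq_bigr do rewrite hcf scaler_sumr.
rewrite exchange_big /=.
apply: big1 => i' _.
under eq_bigr do rewrite scalerA.
by rewrite -scaler_suml hb1 scale0r.
Qed.

Lemma car_step S k (a : 'I_k.+1 -> R) z w : (n.+1 < k.+1)%N -> rep S a z w ->
  exists (a' : 'I_k -> R) (z' : 'I_k -> E), rep S a' z' w.
Proof.
move=> hk [a0 a1 Sz ->].
have [b [[j bj] sb sbz]] := affine_dep z hk.
have [jp bjp] : exists jp, 0 < b jp.
  case/boolP: [exists jp, 0 < b jp] => [/existsP[jp hp] | /existsPn H]; first by exists jp.
  exfalso; have h0 := @psumr_eq0P _ _ predT (fun j => - b j).
  have : - b j = 0.
    apply: h0 => // [i _|]; last by rewrite sumrN sb oppr0.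
    by have := H i; rewrite -leNgt oppr_ge0.
  by move/eqP; rewrite oppr_eq0 (negbTE bj).
have := @arg_minP _ R _ jp (fun i => 0 < b i) (fun i => a i / b i) bjp.
case=> j0 hj0 hmin.
set t := a j0 / b j0.
have t0 : 0 <= t by rewrite /t divr_ge0 // ltW.
pose a2 i := a i - t * b i.
have a20 i : 0 <= a2 i.
  rewrite /a2 subr_ge0; case: (ltrP 0 (b i)) => hbi.
    by have := hmin i hbi; rewrite -/t ler_pdivlMr.
  by apply: le_trans (a0 i); apply: mulr_ge0_le0.
have a2j0 : a2 j0 = 0 by rewrite /a2 /t divfK ?subrr // gt_eqF.
have a21 : \sum_(i < k.+1) a2 i = 1.
  by rewrite /a2 sumrB -mulr_sumr sb mulr0 subr0.
have a2w : \sum_(i < k.+1) a i *: z i = \sum_(i < k.+1) a2 i *: z i.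
  under [RHS]eq_bigr do rewrite /a2 scalerBl -scalerA.
  by rewrite sumrB -scaler_sumr sbz scaler0 subr0.
exists (fun i => a2 (lift j0 i)), (fun i => z (lift j0 i)); split => //.
- by rewrite -a21 (bigD1_ord j0) //= a2j0 add0r.
- by rewrite a2w (bigD1_ord j0) //= a2j0 scale0r add0r.
Qed.

Lemma caratheodory S k (a : 'I_k -> R) z w : rep S a z w ->
  exists (a' : 'I_n.+1 -> R) (z' : 'I_n.+1 -> E), rep S a' z' w.
Proof.
elim: k a z w => [|k IH] a z w.
  by case=> _; rewrite big_ord0 => /eqP; rewrite eq_sym oner_eq0.
case: (leqP k.+1 n.+1) => hk hrep; last first.
  have [a' [z' h']] := car_step hk hrep; exact: IH h'.
case: hrep => a0 a1 Sz ->.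
pose F (m : nat) := if (m < k.+1)%N then a (inord m) else 0.
exists (fun i : 'I_n.+1 => F i), (fun i : 'I_n.+1 => z (inord i)); split => //.
- by move=> i; rewrite /F; case: ifP.
- rewrite /F -big_mkcond /= -(big_ord_widen _ (fun i => a (inord i)) hk).
  by rewrite -a1; apply: eq_bigr => i _; rewrite inord_val.
- have -> : \sum_(i < n.+1) F i *: z (inord i) =
       \sum_(i < n.+1 | (i < k.+1)%N) a (inord i) *: z (inord i).
    by rewrite [RHS]big_mkcond /=; apply: eq_bigr => i _; rewrite /F; case: ifP; rewrite ?scale0r.
  rewrite -(big_ord_widen _ (fun i => a (inord i) *: z (inord i)) hk).
  by apply: eq_bigr => i _; rewrite inord_val.
Qed.

Variable ip : E -> E -> R.
Hypothesis hip : is_inner_product ip.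

Lemma bnd_coef (Y : R) : 0 <= Y -> exists B, 0 <= B /\ forall z, ip z z <= Y ->
  exists c : 'I_n -> R, z = \sum_(i < n) c i *: e i /\ forall i, `|c i| <= B.
Proof.
move=> Y0.
pose Gm : 'M[R]_n := \matrix_(i, k) ip (e i) (e k).
pose Pm := pinvmx Gm.
pose B := \sum_(i < n) \sum_(k < n) ((Y + ip (e k) (e k)) / 2) * `|Pm k i|.
have hterm i k : 0 <= ((Y + ip (e k) (e k)) / 2) * `|Pm k i|.
  by rewrite mulr_ge0 // divr_ge0 // addr_ge0 // ip_ge0.
exists B; split; first by apply: sumr_ge0 => i _; apply: sumr_ge0 => k _.
move=> z hz; have [c hc] := hspan z.
pose phi : 'rV[R]_n := \row_k ip z (e k).
pose cr : 'rV[R]_n := \row_i c i.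
have hphi : phi = cr *m Gm.
  apply/rowP => k; rewrite !mxE hc ip_suml //; apply: eq_bigr => i _.
  by rewrite !mxE ipZl.
pose c' := phi *m Pm.
have hc' : c' *m Gm = phi by rewrite /c' mulmxKpV // hphi submxMl.
exists (fun i => c' ord0 i); split.
  pose w := \sum_(i < n) (c' ord0 i - c i) *: e i.
  have hw k : ip w (e k) = 0.
    rewrite /w ip_suml //.
    have h1 := congr1 (fun M : 'rV[R]_n => M ord0 k) hc'.
    have h2 := congr1 (fun M : 'rV[R]_n => M ord0 k) hphi.
    rewrite /= [LHS]mxE in h1; rewrite /= [RHS]mxE in h2.
    under eq_bigr do rewrite (ipZl hip) mulrBl.
    rewrite sumrB.
    have -> : \sum_(i < n) c' ord0 i * ip (e i) (e k) = phi ord0 k.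
      by rewrite -h1; apply: eq_bigr => i _; rewrite /Gm !mxE.
    have -> : \sum_(i < n) c i * ip (e i) (e k) = phi ord0 k.
      by rewrite h2; apply: eq_bigr => i _; rewrite /Gm /cr !mxE.
    by rewrite subrr.
  have hww : ip w w = 0.
    rewrite {1}/w ip_suml //; apply: big1 => i _.
    by rewrite (ipZl hip) (ipC hip) hw mulr0.
  have w0 := ip_eq0 hip hww.
  move: w0; rewrite /w.
  under eq_bigr do rewrite scalerBl.
  by rewrite sumrB -hc => /eqP; rewrite subr_eq0 => /eqP.
move=> i.
apply: (@le_trans _ _ (\sum_(k < n) ((Y + ip (e k) (e k)) / 2) * `|Pm k i|)); last first.
  by rewrite /B [X in _ <= X](bigD1 i) //= lerDl sumr_ge0 // => j _; apply: sumr_ge0.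
rewrite /c' mxE; apply: (le_trans (ler_norm_sum _ _ _)); apply: ler_sum => k _.
rewrite normrM ler_wpM2r // mxE.
apply: (le_trans (ip_abs_le hip _ _)).
move: hz; lra.
Qed.

End Car.

Section Reals.
Variable R : realType.

Lemma approx_le (r s K : R) :
  (forall eps, 0 < eps -> eps <= 1 -> r <= s + K * eps) -> r <= s.
Proof.
move=> h; rewrite leNgt; apply/negP => hlt.
have hK := ler_norm K; have hK0 := normr_ge0 K.
have K1 : 0 < `|K| + 1 by lra.
case: (lerP ((r - s) / (`|K| + 1)) 1) => hc.
  set eps := (r - s) / (`|K| + 1).
  have e0 : 0 < eps by rewrite divr_gt0 // subr_gt0.
  have he : eps * (`|K| + 1) = r - s by rewrite /eps divfK // gt_eqF.
  have := h eps e0 hc.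
  have : K * eps <= `|K| * eps by rewrite ler_wpM2r // ltW.
  rewrite mulrDr mulr1 in he.
  rewrite (mulrC eps) in he. lra.
have : 1 * (`|K| + 1) < r - s by rewrite -ltr_pdivlMr.
have := h 1 ltr01 (lexx _); lra.
Qed.

Lemma approx_le_quad (r K : R) : 0 <= K ->
  (forall t, 0 < t -> t <= 1 -> 2 * t * r <= t ^+ 2 * K) -> r <= 0.
Proof.
move=> K0 h; apply: (@approx_le r 0 (K / 2)) => t t0 t1.
have := h t t0 t1; rewrite expr2 add0r => hh; nra.
Qed.

End Reals.

Section Top.
Variable R : realType.
Local Open Scope classical_set_scope.

Lemma closed_approx M (A : set 'rV[R]_M) :
  (forall p : 'rV[R]_M, (forall e : R, 0 < e -> exists q : 'rV[R]_M, A q /\ forall k, `|p ord0 k - q ord0 k| < e) -> A p) ->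
  closed A.
Proof.
move=> H p cp; apply: (H p) => e e0.
have [q [Aq bq]] := cp _ (nbhsx_ballx p e e0).
exists q; split => // k.
by move: bq => [_ /(_ ord0 k)].
Qed.

Lemma continuous_sum (T : topologicalType) I (r : seq I) (F : I -> T -> R) :
  (forall i, continuous (F i)) -> continuous (fun p => \sum_(i <- r) F i p).
Proof.
move=> hF; elim: r => [|i r IH].
  under eq_fun do rewrite big_nil. exact: cst_continuous.
under eq_fun do rewrite big_cons.
move=> p; apply: continuousD; [exact: hF | exact: IH].
Qed.

Lemma continuous_mul (T : topologicalType) (f h : T -> R) :
  continuous f -> continuous h -> continuous (fun p => f p * h p).
Proof. by move=> cf ch p; apply: continuousM; [exact: cf | exact: ch]. Qed.

Lemma continuous_sub (T : topologicalType) (f h : T -> R) :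
  continuous f -> continuous h -> continuous (fun p => f p - h p).
Proof. by move=> cf ch p; apply: continuousB; [exact: cf | exact: ch]. Qed.

Lemma box_compact M (b : R) : compact [set v : 'rV[R]_M | forall i, `|v ord0 i| <= b].
Proof.
have -> : [set v : 'rV[R]_M | forall i, `|v ord0 i| <= b] =
   [set v | forall i, (fun=> `[(- b), b]%classic) i (v ord0 i)].
  apply/seteqP; split => v /= h i; have := h i; by rewrite /= in_itv /= ler_norml.
exact: (@rV_compact _ M (fun=> `[(- b), b]%classic) (fun _ => @segment_compact R _ _)).
Qed.

End Top.

Section Sep.
Variable R : realType.
Variables E T : lmodType R.
Variable ip : E -> E -> R.
Variable ipT : T -> T -> R.
Variable g : E -> T.
Hypothesis hip : is_inner_product ip.
Hypothesis hipT : is_inner_product ipT.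
Hypothesis gsq : forall a, ipT (g a) (g a) = ip a a.
Hypothesis gle : forall a b, ip a b <= ipT (g a) (g b).
Variable n : nat.
Variable e : 'I_n -> E.
Hypothesis hspan : forall x : E, exists c : 'I_n -> R, x = \sum_(i < n) c i *: e i.
Variables x y : E.
Hypothesis H : forall c, exists z, g z = g y /\ ip c x <= ip c z.
Variable B : R.
Hypothesis hB0 : 0 <= B.
Hypothesis hB : forall z, ip z z <= ip y y ->
  exists c : 'I_n -> R, z = \sum_(i < n) c i *: e i /\ forall i, `|c i| <= B.

Local Notation S := (fun z => g z = g y).
Local Notation N := n.+1.
Local Notation M := (N + N * n)%N.

Lemma glip a b : ipT (g a - g b) (g a - g b) <= ip (a - b) (a - b).
Proof.
rewrite !(ipBl hipT, ipBr hipT, ipBl hip, ipBr hip) !gsq (ipC hipT (g b)) (ipC hip b).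
have := gle a b; lra.
Qed.

Lemma Snorm z : S z -> ip z z = ip y y.
Proof. by move=> hz; rewrite -gsq hz gsq. Qed.

Definition Aw (p : 'rV[R]_M) (j : 'I_N) := p ord0 (lshift (N * n) j).
Definition Cf (p : 'rV[R]_M) (j : 'I_N) (i : 'I_n) := p ord0 (rshift N (mxvec_index j i)).
Definition Zp p j := \sum_(i < n) Cf p j i *: e i.
Definition Gp p := \sum_(j < N) Aw p j *: Zp p j.
Definition Pset : set 'rV[R]_M := fun p =>
  [/\ (forall j, 0 <= Aw p j), \sum_(j < N) Aw p j = 1, (forall j, S (Zp p j)) &
      (forall j i, `|Cf p j i| <= B)].
Definition hf p := ip (x - Gp p) (x - Gp p).

Lemma enc (a : 'I_N -> R) z w : rep S a z w -> exists p, Pset p /\ Gp p = w.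
Proof.
case=> a0 a1 Sz ->.
have hz j : ip (z j) (z j) <= ip y y by rewrite Snorm.
have [cf hcf] := fin_all_exists (fun j => hB (hz j)).
pose p : 'rV[R]_M := row_mx (\row_j a j) (mxvec (\matrix_(j, i) cf j i)).
have hA j : Aw p j = a j by rewrite /Aw row_mxEl mxE.
have hC j i : Cf p j i = cf j i by rewrite /Cf row_mxEr mxvecE mxE.
have hZ j : Zp p j = z j.
  by rewrite /Zp (proj1 (hcf j)); apply: eq_bigr => i _; rewrite hC.
exists p; split; last by apply: eq_bigr => j _; rewrite hA hZ.
split => [j||j|j i].
- by rewrite hA.
- by rewrite -a1; apply: eq_bigr => j _; rewrite hA.
- by rewrite hZ.
- by rewrite hC; exact: (proj2 (hcf j)).
Qed.

Lemma Pset_box : (Pset `<=` [set v : 'rV[R]_M | forall k, `|v ord0 k| <= 1 + B])%classic.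
Proof.
move=> p [a0 a1 _ cB] k /=.
rewrite -(splitK k); case: (split k) => [j|l] /=.
  have := a0 j; rewrite /Aw => h.
  have : Aw p j <= 1.
    by rewrite -a1 (bigD1 j) //= lerDl sumr_ge0.
  by rewrite /Aw ger0_norm // => h1; apply: (le_trans h1); rewrite lerDl.
case/mxvec_indexP: l => j i.
by have := cB j i; rewrite /Cf => h1; apply: (le_trans h1); rewrite lerDr.
Qed.

Definition K0 := \sum_(i < n) \sum_(k < n) `|ip (e i) (e k)|.

Lemma quad_bound (t : 'I_n -> R) eps : eps <= 1 -> (forall i, `|t i| <= eps) ->
  ip (\sum_(i < n) t i *: e i) (\sum_(i < n) t i *: e i) <= K0 * eps.
Proof.
move=> e1 ht.
rewrite (ip_suml hip); under eq_bigr do rewrite (ipZl hip) (ip_sumr hip).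
rewrite /K0 mulr_suml; apply: ler_sum => i _; rewrite mulr_sumr mulr_suml.
apply: ler_sum => k _; rewrite (ipZr hip).
apply: (le_trans (ler_norm _)); rewrite !normrM (mulrC _ eps).
apply: ler_pM => //; first by rewrite mulr_ge0.
rewrite -[X in _ <= X]mul1r; apply: ler_pM => //.
exact: le_trans (ht k) e1.
Qed.

Lemma sum_close (u v : 'I_N -> R) eps : (forall j, `|u j - v j| <= eps) ->
  `|\sum_(j < N) u j - \sum_(j < N) v j| <= N%:R * eps.
Proof.
move=> h; rewrite -sumrB; apply: (le_trans (ler_norm_sum _ _ _)).
apply: (@le_trans _ _ (\sum_(j < N) eps)); first by apply: ler_sum => j _; exact: h.
by rewrite sumr_const card_ord mulr_natl.
Qed.

Lemma Pset_closed : closed Pset.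
Proof.
apply: closed_approx => p happ.
have hA j eps : 0 < eps -> exists q, Pset q /\ `|Aw p j - Aw q j| < eps.
  by move=> e0; have [q [Pq hq]] := happ eps e0; exists q; split => //; exact: hq.
have hC j i eps : 0 < eps -> exists q, Pset q /\ `|Cf p j i - Cf q j i| < eps.
  by move=> e0; have [q [Pq hq]] := happ eps e0; exists q; split => //; exact: hq.
split.
- move=> j; apply: (@approx_le _ 0 (Aw p j) 1) => eps e0 _.
  have [q [[qa0 _ _ _] hq]] := hA j eps e0.
  move: hq; rewrite ltr_norml => /andP[h2 h3]; have := qa0 j; lra.
- have hs eps : 0 < eps -> exists q, Pset q /\
      `|\sum_(j < N) Aw p j - \sum_(j < N) Aw q j| <= N%:R * eps.
    move=> e0; have [q [Pq hq]] := happ eps e0; exists q; split => //.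
    by apply: sum_close => j; apply: ltW; exact: hq.
  apply/le_anti/andP; split.
    apply: (@approx_le _ _ 1 N%:R) => eps e0 _.
    have [q [[_ q1 _ _] hq]] := hs eps e0.
    by move: hq; rewrite q1 ler_norml => /andP[h2 h3]; lra.
  apply: (@approx_le _ _ _ N%:R) => eps e0 _.
  have [q [[_ q1 _ _] hq]] := hs eps e0.
  by move: hq; rewrite q1 ler_norml => /andP[h2 h3]; lra.
- move=> j.
  have h0 : ipT (g (Zp p j) - g y) (g (Zp p j) - g y) <= 0.
    apply: (@approx_le _ _ 0 K0) => eps e0 e1.
    have [q [[_ _ Sq _] hq]] := happ eps e0.
    rewrite -(Sq j) add0r; apply: (le_trans (glip _ _)).
    have -> : Zp p j - Zp q j = \sum_(i < n) (Cf p j i - Cf q j i) *: e i.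
      by rewrite /Zp -sumrB; apply: eq_bigr => i _; rewrite scalerBl.
    by apply: quad_bound => // i; apply: ltW; exact: hq.
  apply/eqP; rewrite -subr_eq0; apply/eqP; apply: (ip_eq0 hipT).
  by apply: le_anti; rewrite h0 ip_ge0.
- move=> j i; apply: (@approx_le _ _ _ 1) => eps e0 _.
  have [q [[_ _ _ qB] hq]] := hC j i eps e0.
  have := qB j i; move: hq; rewrite ltr_norml => /andP[h2 h3].
  rewrite !ler_norml => /andP[h4 h5]; apply/andP; split; lra.
Qed.

Definition rr p (i : 'I_n) := \sum_(j < N) Aw p j * Cf p j i.

Lemma Gp_rr p : Gp p = \sum_(i < n) rr p i *: e i.
Proof.
rewrite /Gp /Zp; under eq_bigr do rewrite scaler_sumr.
rewrite exchange_big /=; apply: eq_bigr => i _; rewrite /rr scaler_suml.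
by apply: eq_bigr => j _; rewrite scalerA.
Qed.

Lemma hf_poly p : hf p = ip x x - 2 * \sum_(i < n) rr p i * ip x (e i)
   + \sum_(i < n) \sum_(k < n) rr p i * (rr p k * ip (e i) (e k)).
Proof.
rewrite /hf Gp_rr (ipBl hip) !(ipBr hip).
have e1 : ip x (\sum_(i < n) rr p i *: e i) = \sum_(i < n) rr p i * ip x (e i).
  by rewrite (ip_sumr hip); apply: eq_bigr => i _; rewrite (ipZr hip).
have e2 : ip (\sum_(i < n) rr p i *: e i) x = \sum_(i < n) rr p i * ip x (e i).
  by rewrite (ipC hip) e1.
have e3 : ip (\sum_(i < n) rr p i *: e i) (\sum_(i < n) rr p i *: e i) =
   \sum_(i < n) \sum_(k < n) rr p i * (rr p k * ip (e i) (e k)).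
  rewrite (ip_suml hip); apply: eq_bigr => i _; rewrite (ipZl hip) (ip_sumr hip) mulr_sumr.
  by apply: eq_bigr => k _; rewrite (ipZr hip).
rewrite e1 e2 e3; lra.
Qed.

Lemma continuous_add (TT : topologicalType) (f h : TT -> R) :
  continuous f -> continuous h -> continuous (fun p => f p + h p).
Proof. by move=> cf ch p; apply: continuousD; [exact: cf | exact: ch]. Qed.

Lemma hf_cont : continuous hf.
Proof.
have -> : hf = (fun p => ip x x - 2 * \sum_(i < n) rr p i * ip x (e i)
   + \sum_(i < n) \sum_(k < n) rr p i * (rr p k * ip (e i) (e k))).
  by apply: funext => p; exact: hf_poly.
have cAw j : continuous (fun p : 'rV[R]_M => Aw p j) by move=> p; exact: coord_continuous.
have cCf j i : continuous (fun p : 'rV[R]_M => Cf p j i) by move=> p; exact: coord_continuous.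
have crr i : continuous (fun p => rr p i).
  by apply: continuous_sum => j; apply: continuous_mul.
apply: continuous_add; first apply: continuous_sub.
- exact: cst_continuous.
- apply: continuous_mul; first exact: cst_continuous.
  apply: continuous_sum => i; apply: continuous_mul => //; exact: cst_continuous.
- apply: continuous_sum => i; apply: continuous_sum => k.
  apply: continuous_mul => //; apply: continuous_mul => //; exact: cst_continuous.
Qed.

Lemma variation p : Pset p -> (forall q, Pset q -> hf p <= hf q) ->
  forall z, S z -> ip (x - Gp p) (z - Gp p) <= 0.
Proof.
move=> Pp hmin z Sz.
set d := x - Gp p; set w := z - Gp p.
apply: (@approx_le_quad _ _ (ip w w)); first exact: ip_ge0.
move=> t t0 t1.
have [q [Pq Gq]] : exists q, Pset q /\ Gp q = Gp p + t *: w.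
  case: Pp => a0 a1 SZ _.
  pose a2 (i : 'I_N.+1) := if (i < N)%N then (1 - t) * Aw p (inord i) else t.
  pose z2 (i : 'I_N.+1) := if (i < N)%N then Zp p (inord i) else z.
  have hr : rep S a2 z2 (Gp p + t *: w).
    split.
    - move=> i; rewrite /a2; case: ifP => _; last exact: ltW.
      by rewrite mulr_ge0 // subr_ge0.
    - rewrite big_ord_recr /= /a2 /= ltnn.
      under eq_bigr do rewrite ltn_ord inord_val.
      by rewrite -mulr_sumr a1 mulr1 subrK.
    - by move=> i; rewrite /z2; case: ifP.
    - rewrite big_ord_recr /= /a2 /z2 /= ltnn.
      under eq_bigr do rewrite ltn_ord inord_val -scalerA.
      rewrite -scaler_sumr -/(Gp p) /w scalerBr scalerBl scale1r.
      by rewrite addrA addrAC.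
  have [a' [z' hr']] := caratheodory hspan hr.
  exact: enc hr'.
have := hmin q Pq; rewrite /hf Gq.
have -> : x - (Gp p + t *: w) = d - t *: w by rewrite /d opprD addrA.
rewrite !(ipBl hip, ipBr hip, ipZl hip, ipZr hip) expr2 (ipC hip (Gp p) x) (ipC hip z x) (ipC hip (Gp p) z).
lra.
Qed.

Lemma sep_core : conv S x.
Proof.
have [z0 [Sz0 _]] := H 0.
have Pn : (Pset !=set0)%classic.
  have hr : rep S (fun _ : 'I_1 => 1) (fun _ => z0) z0.
    by split => //; rewrite big_ord1 // scale1r.
  have [a' [z' hr']] := caratheodory hspan hr.
  by have [p [Pp _]] := enc hr'; exists p.
have cP : compact Pset := subclosed_compact Pset_closed (@box_compact R M (1 + B)) Pset_box.
have ch : {within Pset, continuous hf}%classic by apply: continuous_subspaceT; exact: hf_cont.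
have [p Pp hmin] := EVT_min_rV Pn cP ch.
move: Pp; rewrite inE => Pp.
have hmin' q : Pset q -> hf p <= hf q by move=> Pq; apply: hmin; rewrite inE.
set d := x - Gp p.
have [z [Sz hz]] := H d.
have hv := variation Pp hmin' Sz.
have hd : ip d d <= 0.
  rewrite {2}/d (ipBr hip); rewrite (ipBr hip) in hv; lra.
have d0 : d = 0 by apply: (ip_eq0 hip); apply: le_anti; rewrite hd ip_ge0.
case: Pp => a0 a1 SZ _.
exists N, (Aw p), (Zp p); split => //.
by apply/eqP; rewrite -subr_eq0 -/d d0.
Qed.

End Sep.

Lemma sep (R : realType) (E T : lmodType R) (ip : E -> E -> R) (ipT : T -> T -> R) (g : E -> T) :
  is_inner_product ip -> is_inner_product ipT -> finite_dim E ->
  (forall a, ipT (g a) (g a) = ip a a) ->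
  (forall a b, ip a b <= ipT (g a) (g b)) ->
  forall x y, (forall c, exists z, g z = g y /\ ip c x <= ip c z) ->
  conv (fun z => g z = g y) x.
Proof.
move=> hip hipT [n [e hspan]] gsq gle x y H.
have [B [B0 hB]] := bnd_coef hspan hip (ip_ge0 hip y).
exact: (sep_core hip hipT gsq gle hspan H B0 hB).
Qed.


Section Main.
Variable R : realType.

Lemma ftvn_sq (V W : lmodType R) (ipV : V -> V -> R) (ipW : W -> W -> R) lam :
  FTvN ipV ipW lam -> forall x, ipW (lam x) (lam x) = ipV x x.
Proof.
case=> hV hW A1 _ _ x; have := congr1 (fun t => t ^+ 2) (A1 x).
by rewrite /ipnorm !sqr_sqrtr // ip_ge0.
Qed.



Lemma sepF (E T : lmodType R) (ip : E -> E -> R) (ipT : T -> T -> R) (g : E -> T) :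
  FTvN ip ipT g -> finite_dim E ->
  forall x y, (forall c, ip c x <= ipT (g c) (g y)) ->
  conv (fun z => g z = g y) x.
Proof.
move=> F fd x y H; have := F; case=> hE hT A1 A2 A3.
apply: (sep hE hT fd (ftvn_sq F) A2) => c.
have [z [gz hz]] := A3 c (g y) (ex_intro _ y erefl).
by exists z; split => //; rewrite hz gz.
Qed.

Lemma conv_ip (E : lmodType R) (ip : E -> E -> R) (S : E -> Prop) x c M :
  is_inner_product ip -> conv S x -> (forall z, S z -> ip c z <= M) -> ip c x <= M.
Proof.
move=> hip [n [a [z [a0 a1 Sz ->]]]] hM.
rewrite ip_sumr //.
apply: (@le_trans _ _ (\sum_(i < n) a i * M)); last by rewrite -mulr_suml a1 mul1r.
apply: ler_sum => i _; rewrite ipZr //; apply: ler_wpM2l => //; exact: hM.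
Qed.

End Main.

Theorem theorem10p3 (R : realType) (V W : lmodType R)
    (ipV : V -> V -> R) (ipW : W -> W -> R) (lam : V -> W) (mu : W -> W) :
  reduced_system ipV ipW lam mu ->
  finite_dim W ->
  (* (a) *)
  (forall u v : W, (exists xu, lam xu = u) -> (exists xv, lam xv = v) ->
     (forall f : W, (exists xf, lam xf = f) -> 0 <= ipW (u - v) f) ->
     majW mu v u) /\
  (* (b) *)
  (forall (k : nat) (x : 'I_k -> V),
     majW mu (lam (\sum_(i < k) x i)) (\sum_(i < k) lam (x i))) /\
  (* (c) *)
  (forall x y : V, majV lam x y -> majW mu (lam x) (lam y)) /\
  (finite_dim V ->
     forall x y : V, majW mu (lam x) (lam y) -> majV lam x y).
Proof.
move=> [FL FM C1 C2] fdW.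
have FL' := FL; have FM' := FM.
case: FL' => hV hW A1 A2 A3; case: FM' => _ _ B1 B2 B3.
have step1 c w : (exists t, lam t = w) -> ipW c w <= ipW (mu c) w.
  by move=> [t <-]; rewrite -{2}(C1 t); exact: B2.
split; [|split; [|split]].
- move=> u v [xu hu] [xv hv] hF; rewrite /majW.
  apply: (sepF FM fdW) => c.
  rewrite -hu C1 hu.
  apply: (le_trans (step1 c v (ex_intro _ xv hv))).
  have [z hz] := C2 c.
  have := hF (mu c) (ex_intro _ z (esym hz)).
  rewrite ipBl // (ipC hW u) (ipC hW v); lra.
- move=> k x; rewrite /majW; apply: (sepF FM fdW) => c.
  set s := \sum_(i < k) x i; set Y := \sum_(i < k) lam (x i).
  apply: (le_trans (step1 c _ (ex_intro _ s erefl))).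
  have [z hz] := C2 c; rewrite hz.
  have [x' [hx' hs]] := A3 s (lam z) (ex_intro _ z erefl).
  rewrite (ipC hW) -hx' -hs /s ip_suml //.
  apply: (@le_trans _ _ (ipW Y (lam x'))).
    rewrite /Y ip_suml //; apply: ler_sum => i _; exact: A2.
  rewrite hx' -{2}(C1 z) (ipC hW); exact: B2.
- move=> x y hxy; rewrite /majW; apply: (sepF FM fdW) => c.
  apply: (le_trans (step1 c _ (ex_intro _ x erefl))).
  have [z hz] := C2 c; rewrite hz C1.
  have [x' [hx' hs]] := A3 x (lam z) (ex_intro _ z erefl).
  rewrite (ipC hW) -hx' -hs (ipC hV).
  apply: (conv_ip hV hxy) => w hw.
  by rewrite (ipC hV); apply: (le_trans (A2 _ _)); rewrite hw (ipC hW).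
- move=> fdV x y hxy; rewrite /majV; apply: (sepF FL fdV) => c.
  apply: (le_trans (A2 c x)).
  apply: (conv_ip hW hxy) => w hw.
  by apply: (le_trans (B2 _ _)); rewrite hw !C1.
Qed.
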